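(* Let $n\ge1$ and $\mathcal{K}=\{\texttt{a},\texttt{b}\}$ (so $k=2$). For the uniform prior $\pi$ on $\mathcal{K}^n$ and the single-target gain function $g_{\rm T}$, the posterior vulnerability of the shuffle channel is $$V_{\rm T}[\pi\triangleright\mathbf{S}]=\frac{1}{2^n}\sum_{i=0}^{n}\binom{n}{i}\frac{\max(i,n-i)}{n}.$$
   Context: A dataset is $x=(x_0,\dots,x_{n-1})\in\mathcal{K}^n$; its histogram $h(x)$ is the map $\kappa\mapsto|\{i:x_i=\kappa\}|$; $\#z$ is the number of datasets with histogram $z$. Shuffle channel $\mathbf{S}:\mathcal{K}^n\to\mathcal{K}^n$: $\mathbf{S}_{x,y}=1/\#h(x)$ if $h(y)=h(x)$, else $0$. Uniform prior: $\pi_x=1/2^n$. Single-target gain function: $\mathcal{W}=\mathcal{K}$, $g_{\rm T}(w,x)=1$ if $x_0=w$, else $0$. Posterior vulnerability: $V_{\rm T}[\pi\triangleright\mathbf{C}]=\sum_{y}\max_{w\in\mathcal{W}}\sum_{x}\pi_x\mathbf{C}_{x,y}g_{\rm T}(w,x)$. *)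

(* Defs.v *)
From HB Require Import structures.
From mathcomp Require Import all_boot all_order all_algebra.
Set Implicit Arguments. Unset Strict Implicit. Unset Printing Implicit Defensive.
Import Order.TTheory GRing.Theory Num.Theory.
Local Open Scope ring_scope.

Inductive letter := la | lb.
Definition letter_to_bool (x : letter) : bool := if x is la then true else false.
Definition bool_to_letter (b : bool) : letter := if b then la else lb.
Lemma letter_boolK : cancel letter_to_bool bool_to_letter. Proof. by case. Qed.
HB.instance Definition _ := Finite.copy letter (can_type letter_boolK).

Definition dataset (K : finType) (n : nat) := n.-tuple K.

Definition hist (K : finType) (n : nat) (x : n.-tuple K) : {ffun K -> nat} :=
  [ffun k => count_mem k x].

Definition nhist (K : finType) (n : nat) (z : {ffun K -> nat}) : nat :=
  #|[set x : n.-tuple K | hist x == z]|.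

Definition shuffle (R : realFieldType) (K : finType) (n : nat)
  (x y : n.-tuple K) : R :=
  if hist y == hist x then 1 / (nhist n (hist x))%:R else 0.

Definition uniform_prior (R : realFieldType) (K : finType) (n : nat)
  (x : n.-tuple K) : R := 1 / (#|K| ^ n)%:R.

Definition gainT (R : realFieldType) (K : finType) (n : nat)
  (w : K) (x : n.-tuple K) : R :=
  match x : seq K with w' :: _ => if w' == w then 1 else 0 | [::] => 0 end.

Definition post_vuln (R : realFieldType) (K : finType) (n : nat)
  (g : K -> n.-tuple K -> R) (pi : n.-tuple K -> R)
  (C : n.-tuple K -> n.-tuple K -> R) : R :=
  \sum_(y : n.-tuple K) \big[Num.max/0]_(w : K) \sum_(x : n.-tuple K) pi x * C x y * g w x.

(* Main.v *)
Require Import Defs.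
From HB Require Import structures.
From mathcomp Require Import all_boot all_order all_algebra.
From mathcomp Require Import zify ring lra.
Import Order.TTheory GRing.Theory Num.Theory.
Local Open Scope ring_scope.

Lemma enum_letter : index_enum letter = [:: la; lb] \/ index_enum letter = [:: lb; la].
Proof.
have U := index_enum_uniq letter.
have M : forall w : letter, w \in index_enum letter by move=> w; rewrite mem_index_enum.
have P : perm_eq (index_enum letter) [:: la; lb].
  by apply: uniq_perm => // w; rewrite M; case: w.
have := perm_size P; case E: (index_enum letter) => [|a [|b [|? ?]]] //= _.
have := M la; have := M lb; rewrite E !inE.
by case: a {E}; case: b => //= *; [left|right].
Qed.

Lemma card_letter : #|{: letter}| = 2%N.
Proof. by rewrite cardT enumT -[Finite.enum _]/(index_enum letter); case: enum_letter => ->. Qed.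

Lemma big_letter (T : Type) (idx : T) (op : T -> T -> T) (F : letter -> T) :
  (forall a b, op a b = op b a) -> (forall a b c, op a (op b c) = op (op a b) c) ->
  \big[op/idx]_(w : letter) F w = op (F la) (op (F lb) idx).
Proof.
move=> C A; case: enum_letter => E; rewrite [index_enum _]E !big_cons big_nil //.
by rewrite A (C (F lb)) -A.
Qed.

Definition c {n} (x : n.-tuple letter) := count_mem la x.

Lemma hist_eq n (x y : n.-tuple letter) : (hist x == hist y) = (c x == c y).
Proof.
apply/eqP/eqP => [/ffunP /(_ la)|E]; first by rewrite !ffunE.
apply/ffunP => k; rewrite !ffunE; case: k; first exact E.
have Hx := count_predC (pred1 la) x; have Hy := count_predC (pred1 la) y.
rewrite !size_tuple in Hx Hy.
have ex : forall s : seq letter, count_mem lb s = count (predC (pred1 la)) s.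
  by move=> s; apply: eq_count; case.
rewrite !ex; rewrite /c in E; move: Hx Hy; rewrite E => h1 h2; apply/eqP; rewrite -(eqn_add2l (count_mem la y)) h1 h2 //.
Qed.

Lemma sum_cons (T : Type) (idx : T) (op : Monoid.com_law idx) m (F : (m.+1).-tuple letter -> T) :
  \big[op/idx]_(x : (m.+1).-tuple letter) F x =
  \big[op/idx]_(a : letter) \big[op/idx]_(t : m.-tuple letter) F [tuple of a :: t].
Proof.
rewrite pair_big (reindex (fun p : letter * m.-tuple letter => [tuple of p.1 :: p.2])) //=.
exists (fun x => (thead x, behead_tuple x)) => [[a t] _|x _] /=.
  by congr pair; apply: val_inj.
by rewrite [RHS]tuple_eta; apply: val_inj.
Qed.

Definition cnt m i : nat := \sum_(x : m.-tuple letter) (c x == i).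

Lemma cntE m i : cnt m i = 'C(m, i).
Proof.
elim: m i => [|m IH] i.
  rewrite /cnt (eq_bigr (fun _ => nat_of_bool (0 == i)%N)) => [|x _]; last by rewrite tuple0.
  by rewrite sum_nat_const card_tuple expn0 mul1n; case: i.
rewrite /cnt (@sum_cons _ 0%N addn) big_letter; [|exact: addnC|exact: addnA].
rewrite /c /= addn0.
under [X in (_ + X)%N]eq_bigr do rewrite add0n.
case: i => [|i].
  by rewrite big1 // -[X in (_ + X)%N]/(cnt m 0) IH !bin0.
under eq_bigr do rewrite add1n eqSS.
rewrite -[X in (X + _)%N]/(cnt m i).
have -> : (\sum_(t : m.-tuple letter) (count_mem la t == i.+1))%N = cnt m i.+1 by [].
by rewrite !IH binS addnC.
Qed.

Lemma nhistE n (x : n.-tuple letter) : nhist n (hist x) = 'C(n, c x).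
Proof.
rewrite /nhist -cntE /cnt -sum1_card big_mkcond /=; apply: eq_bigr => z _.
by rewrite inE hist_eq; case: (c z == c x).
Qed.

Lemma gainTE (R : realFieldType) m w (x : (m.+1).-tuple letter) :
  gainT R w x = (thead x == w)%:R.
Proof. by rewrite [x]tuple_eta /gainT /=; case: ifP. Qed.

Lemma cntA m i :
  (m.+1 * \sum_(x : (m.+1).-tuple letter) ((c x == i) * (thead x == la)))%N = (i * 'C(m.+1, i))%N.
Proof.
rewrite (@sum_cons _ 0%N addn) big_letter; [|exact: addnC|exact: addnA].
rewrite /c /= addn0.
under [X in (_ + X)%N]eq_bigr do rewrite muln0.
rewrite big1_eq addn0.
under eq_bigr do rewrite muln1.
case: i => [|i]; first by rewrite big1 ?muln0.
under eq_bigr do rewrite add1n eqSS.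
have -> : (\sum_(t : m.-tuple letter) (count_mem la t == i))%N = cnt m i by [].
by rewrite cntE; exact: (mul_bin_diag m.+1 i).
Qed.

Lemma cntB m i :
  (m.+1 * \sum_(x : (m.+1).-tuple letter) ((c x == i) * (thead x == lb)))%N = ((m.+1 - i) * 'C(m.+1, i))%N.
Proof.
rewrite (@sum_cons _ 0%N addn) big_letter; [|exact: addnC|exact: addnA].
rewrite /c /= addn0.
under eq_bigr do rewrite muln0.
rewrite big1 // add0n.
under eq_bigr do rewrite muln1 add0n.
have -> : (\sum_(t : m.-tuple letter) (count_mem la t == i))%N = cnt m i by [].
by rewrite cntE; exact: (mul_bin_down m.+1 i).
Qed.

Lemma c_le n (x : n.-tuple letter) : (c x <= n)%N.
Proof. by rewrite /c -[X in (_ <= X)%N](size_tuple x) count_size. Qed.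

Lemma inner (R : realFieldType) m (y : (m.+1).-tuple letter) w :
  \sum_(x : (m.+1).-tuple letter) uniform_prior R x * shuffle R x y * gainT R w x =
  1 / (2 ^ m.+1)%:R * ((if w == la then c y else (m.+1 - c y)%N)%:R / (m.+1)%:R).
Proof.
set i := c y.
have Cn0 : ('C(m.+1, i))%:R != 0 :> R by rewrite pnatr_eq0 -lt0n bin_gt0 c_le.
transitivity (1 / (2 ^ m.+1)%:R * (1 / ('C(m.+1, i))%:R) *
   (\sum_(x : (m.+1).-tuple letter) ((c x == i) * (thead x == w))%N)%:R : R).
  rewrite natr_sum mulr_sumr; apply: eq_bigr => x _.
  rewrite /uniform_prior /shuffle card_letter gainTE hist_eq nhistE natrM /i.
  case: (eqVneq (c x) (c y)) => [->|NE]; first by rewrite /= mulr1n (mul1r ((thead x == w)%:R)).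
  by rewrite /= mulr0n !(mulr0, mul0r).
have Hn : (m.+1)%:R != 0 :> R by rewrite pnatr_eq0.
case: w.
  have E := cntA m i.
  have -> : (\sum_(x : (m.+1).-tuple letter) ((c x == i) * (thead x == la)))%N%:R
     = (i * 'C(m.+1, i))%:R / (m.+1)%:R :> R.
    by rewrite -E natrM mulrAC mulfV // mul1r.
  rewrite natrM /=; field; by rewrite nat1r Hn pnatr_eq0 expn_eq0 Cn0.
have E := cntB m i.
have -> : (\sum_(x : (m.+1).-tuple letter) ((c x == i) * (thead x == lb)))%N%:R
   = ((m.+1 - i) * 'C(m.+1, i))%:R / (m.+1)%:R :> R.
  by rewrite -E natrM mulrAC mulfV // mul1r.
rewrite natrM /=; field; by rewrite nat1r Hn pnatr_eq0 expn_eq0 Cn0.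
Qed.

Lemma sum_c (R : realFieldType) n (G : nat -> R) :
  \sum_(y : n.-tuple letter) G (c y) = \sum_(i < n.+1) ('C(n, i))%:R * G i.
Proof.
symmetry.
under eq_bigr => i _ do rewrite -cntE /cnt natr_sum mulr_suml.
rewrite exchange_big; apply: eq_bigr => y _.
have hy : (c y < n.+1)%N by rewrite ltnS c_le.
rewrite (bigD1 (Ordinal hy)) //= eqxx mulr1n mul1r big1 ?addr0 // => j.
rewrite -val_eqE /= eq_sym => /negbTE ->; by rewrite mulr0n mul0r.
Qed.

Lemma maxval (R : realFieldType) (a N : R) n i : 0 <= a -> 0 < N ->
  Num.max (a * (i%:R / N)) (Num.max (a * ((n - i)%N%:R / N)) 0) =
  a * ((maxn i (n - i))%:R / N).
Proof.
move=> a0 N0.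
have p : forall k : nat, 0 <= a * (k%:R / N).
  by move=> k; apply: mulr_ge0 => //; apply: divr_ge0 => //; apply: ltW.
rewrite (@max_l _ _ _ 0) ?p //.
case: (leqP i (n - i)) => h.
  rewrite max_r ?(maxn_idPr h) //.
  by apply: ler_wpM2l => //; rewrite ler_pM2r ?invr_gt0 // ler_nat.
rewrite max_l ?(maxn_idPl (ltnW h)) //.
by apply: ler_wpM2l => //; rewrite ler_pM2r ?invr_gt0 // ler_nat // ltnW.
Qed.

Lemma max_letter (R : realFieldType) (F : letter -> R) :
  \big[Num.max/0]_(w : letter) F w = Num.max (F la) (Num.max (F lb) 0).
Proof. apply: big_letter; [exact: maxC|exact: maxA]. Qed.

Theorem mainTheorem9 (R : realFieldType) (n : nat) (hn : (1 <= n)%N) :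
  post_vuln (@gainT R letter n) (@uniform_prior R letter n) (@shuffle R letter n)
  = 1 / (2 ^ n)%:R *
    \sum_(i < n.+1) 'C(n, i)%:R * ((maxn i (n - i))%:R / n%:R).
Proof.
case: n hn => // m _.
rewrite /post_vuln.
under eq_bigr => y _ do rewrite max_letter !inner /=.
under eq_bigr => y _ do rewrite maxval ?divr_ge0 ?ltr0n //.
rewrite (@sum_c R m.+1 (fun i => 1 / (2 ^ m.+1)%:R * ((maxn i (m.+1 - i))%:R / (m.+1)%:R))).
by rewrite mulr_sumr; apply: eq_bigr => i _; rewrite mulrCA.
Qed.
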